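(* Let $\xi^{(1)},\dots,\xi^{(N)}\in\mathbb{R}^D$, $\epsilon\in(0,1)$, and let $\alpha$, $\mathrm{SV}$, $\mathrm{BSV}\neq\emptyset$, $W$, $\gamma$ and the polyhedron $$\mathcal{U}=\Big\{\xi\in\mathbb{R}^D\ \Big|\ \exists\,\upsilon_n\in\mathbb{R}^D\ (n\in\mathrm{SV})\ \text{s.t.}\ \sum_{n\in\mathrm{SV}}\alpha_n\upsilon_n^\intercal\mathbf{1}\le\gamma,\ \ -\upsilon_n\le W(\xi-\xi^{(n)})\le\upsilon_n\ \ \forall n\in\mathrm{SV}\Big\}$$ be as described in the context. Let $y\in\mathbb{R}^p$, $H\in\mathbb{R}^{p\times D}$ and $\beta\in\mathbb{R}$. Then the robust constraint $$\max_{\xi\in\mathcal{U}}\ (H\xi)^\intercal y\le\beta$$ holds if and only if there exist $\pi\ge0$ and $\mu_n,\rho_n\in\mathbb{R}^D_{\ge0}$ for $n\in\mathrm{SV}$ such that $$\sum_{n\in\mathrm{SV}}(\mu_n-\rho_n)^\intercal W\xi^{(n)}+\pi\gamma\le\beta,\qquad \sum_{n\in\mathrm{SV}}W(\rho_n-\mu_n)+H^\intercal y=0,\qquad \rho_n+\mu_n=\pi\alpha_n\mathbf 1\ \ \forall n\in\mathrm{SV}.$$ (These are linear constraints in $(y,\beta,\pi,\mu,\rho)$ when $\beta$ is affine in $y$.)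
   Context: Let $\Sigma$ be the (positive definite) covariance matrix of the samples and $W=\Sigma^{-1/2}$ (symmetric). For $d=1,\dots,D$ let $l_d=\xi_{d,\max}-\xi_{d,\min}$ (upper minus lower bound of the uncertainty in coordinate $d$). Kernel: $K(\xi^{1},\xi^{2})=\sum_{d=1}^D l_d-\Vert W(\xi^{1}-\xi^{2})\Vert_1$, with feature map $\phi$ into a Hilbert space satisfying $\phi(a)^\intercal\phi(b)=K(a,b)$. One-class support vector clustering solves $$\min_{R,o,\omega}\ R^2+\frac{1}{N\epsilon}\sum_{n=1}^N\omega_n\quad\text{s.t.}\quad \Vert\phi(\xi^{(n)})-o\Vert^2\le R^2+\omega_n,\ \ \omega_n\ge0,\ \ n=1,\dots,N.$$ Let $(R,o,\omega)$ be optimal with multipliers $\alpha,\beta'\in\mathbb{R}^N_{\ge0}$ satisfying the KKT conditions $\mathbf 1^\intercal\alpha=1$, $o=\sum_n\alpha_n\phi(\xi^{(n)})$, $\alpha+\beta'=\frac{1}{N\epsilon}\mathbf 1$, $\omega_n\beta'_n=0$, $\alpha_n(R^2+\omega_n-\Vert\phi(\xi^{(n)})-o\Vert^2)=0$. Let $\mathrm{SV}=\{n:\alpha_n>0\}$, $\mathrm{BSV}=\{n:0<\alpha_n<1/(N\epsilon)\}$, and for any $k\in\mathrm{BSV}$ let $\gamma=\sum_{n\in\mathrm{SV}}\alpha_n\Vert W(\xi^{(k)}-\xi^{(n)})\Vert_1$. Vector inequalities are componentwise and $\mathbf 1$ is the all-ones vector. *)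

(* Defs.v *)
From mathcomp Require Import all_boot all_order all_algebra.
Set Implicit Arguments. Unset Strict Implicit. Unset Printing Implicit Defensive.
Import Order.TTheory GRing.Theory Num.Theory.
Local Open Scope ring_scope.

Section Defs.
Variable R : realFieldType.

Definition vle (D : nat) (u v : 'cV[R]_D) : Prop := forall i, u i 0 <= v i 0.

Definition ones (D : nat) : 'cV[R]_D := const_mx 1.

Definition l1norm (D : nat) (v : 'cV[R]_D) : R := \sum_i `|v i 0|.

Definition smean (N D : nat) (xi : 'I_N -> 'cV[R]_D) : 'cV[R]_D :=
  N%:R^-1 *: \sum_n xi n.
Definition scov (N D : nat) (xi : 'I_N -> 'cV[R]_D) : 'M[R]_D :=
  N%:R^-1 *: \sum_n ((xi n - smean xi) *m (xi n - smean xi)^T).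

Definition posdef (D : nat) (A : 'M[R]_D) : Prop :=
  forall x : 'cV[R]_D, x != 0 -> 0 < (x^T *m A *m x) 0 0.

Definition inv_sqrt_of (D : nat) (W S : 'M[R]_D) : Prop :=
  W^T = W /\ posdef W /\ W *m W *m S = 1%:M.

Definition kern (D : nat) (l : 'I_D -> R) (W : 'M[R]_D) (a b : 'cV[R]_D) : R :=
  \sum_d l d - l1norm (W *m (a - b)).

(* ||phi(xi^(n)) - o||^2 with o = sum_m alpha_m phi(xi^(m)), written via the kernel *)
Definition fdist2 (N : nat) (K : 'I_N -> 'I_N -> R) (alpha : 'I_N -> R) (n : 'I_N) : R :=
  K n n - 2 * (\sum_m alpha m * K n m) + \sum_m \sum_k alpha m * alpha k * K m k.

(* (R, o, omega) is feasible for the one-class SVC problem and alpha is a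
   KKT multiplier (together with some beta'), with o = sum alpha_n phi(xi^(n)) *)
Definition svc_kkt (N : nat) (eps : R) (K : 'I_N -> 'I_N -> R) (alpha : 'I_N -> R) : Prop :=
  exists (Rr : R) (omega beta' : 'I_N -> R),
    (forall n, fdist2 K alpha n <= Rr ^+ 2 + omega n) /\
    (forall n, 0 <= omega n) /\
    (forall n, 0 <= alpha n /\ 0 <= beta' n) /\
    \sum_n alpha n = 1 /\
    (forall n, alpha n + beta' n = (N%:R * eps)^-1) /\
    (forall n, omega n * beta' n = 0) /\
    (forall n, alpha n * (Rr ^+ 2 + omega n - fdist2 K alpha n) = 0).

Definition inSV (N : nat) (alpha : 'I_N -> R) (n : 'I_N) : bool := 0 < alpha n.
Definition inBSV (N : nat) (eps : R) (alpha : 'I_N -> R) (n : 'I_N) : bool :=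
  (0 < alpha n) && (alpha n < (N%:R * eps)^-1).

Definition gammak (N D : nat) (alpha : 'I_N -> R) (W : 'M[R]_D)
  (xi : 'I_N -> 'cV[R]_D) (k : 'I_N) : R :=
  \sum_(n | inSV alpha n) alpha n * l1norm (W *m (xi k - xi n)).

Definition inU (N D : nat) (alpha : 'I_N -> R) (W : 'M[R]_D)
  (xi : 'I_N -> 'cV[R]_D) (gamma : R) (x : 'cV[R]_D) : Prop :=
  exists ups : 'I_N -> 'cV[R]_D,
    \sum_(n | inSV alpha n) alpha n * ((ups n)^T *m (const_mx 1 : 'cV[R]_D)) 0 0 <= gamma /\
    forall n, inSV alpha n ->
      vle (- ups n) (W *m (x - xi n)) /\ vle (W *m (x - xi n)) (ups n).

End Defs.

(* Main.v *)
Require Import Defs.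
From mathcomp Require Import all_boot all_order all_algebra.
Import Order.TTheory GRing.Theory Num.Theory.
Local Open Scope ring_scope.
From mathcomp Require Import ring lra.

Set Implicit Arguments. Unset Strict Implicit. Unset Printing Implicit Defensive.


Definition feas (R : realFieldType) (V : finType) (J : finType) (al b : J -> R) (L : J -> V -> R) (t : R) (x : V -> R) :=
  forall j, al j * t + \sum_v L j v * x v <= b j.

Lemma exists_min (R : realFieldType) (J : finType) (P : pred J) (F : J -> R) j0 :
  P j0 -> exists2 j, P j & forall j', P j' -> F j <= F j'.
Proof. by move=> Pj0; case: (arg_minP F Pj0) => j Pj H; exists j. Qed.

Lemma exists_max (R : realFieldType) (J : finType) (P : pred J) (F : J -> R) j0 :
  P j0 -> exists2 j, P j & forall j', P j' -> F j' <= F j.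
Proof. by move=> Pj0; case: (arg_maxP F Pj0) => j Pj H; exists j. Qed.

Lemma farkas (R : realFieldType) (V : finType) n : forall (S : {set V}) (J : finType) (al b : J -> R) (L : J -> V -> R) (beta : R),
  #|S| = n -> (forall j v, v \notin S -> L j v = 0) ->
  (exists t x, feas al b L t x) -> (forall t x, feas al b L t x -> t <= beta) ->
  exists lam : J -> R, [/\ forall j, 0 <= lam j, forall v, \sum_j lam j * L j v = 0,
     \sum_j lam j * al j = 1 & \sum_j lam j * b j <= beta].
Proof.
elim: n => [|n IH] S J al b L beta.
- move=> /eqP; rewrite cards_eq0 => /eqP -> L0 [t0 [x0 F0]] Hb.
  have {}L0 j v : L j v = 0 by apply: L0; rewrite in_set0.
  have sum0 j (x : V -> R) : \sum_v L j v * x v = 0.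
    by apply: big1 => v _; rewrite L0 mul0r.
  have G0 j : al j * t0 <= b j by have := F0 j; rewrite sum0 addr0.
  have Hb' t : (forall j, al j * t <= b j) -> t <= beta.
    by move=> H; apply: (Hb t x0) => j; rewrite sum0 addr0.
  case: (pickP (fun j => 0 < al j)) => [j0 Hj0 | none].
  + have [js Pjs Hmin] := @exists_min R J (fun j => 0 < al j) (fun j => b j / al j) j0 Hj0.
    have tle : b js / al js <= beta.
      apply: Hb' => j.
      have [aj0|aj0|aj0] := ltrgtP 0 (al j).
      * by have := Hmin j aj0; rewrite ler_pdivlMr // mulrC.
      * have H1 : t0 <= b js / al js by rewrite ler_pdivlMr // mulrC G0.
        have := G0 j; nra.
      * by rewrite -aj0 mul0r; have := G0 j; rewrite -aj0 mul0r.
    exists (fun j => if j == js then (al js)^-1 else 0); split.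
    * by move=> j; case: eqP => _ //; rewrite invr_ge0 ltW.
    * by move=> v; apply: big1 => j _; rewrite L0 mulr0.
    * rewrite (bigD1 js) //= eqxx big1 ?addr0 => [|j /negbTE ->]; last by rewrite mul0r.
      by rewrite mulVf // gt_eqF.
    * rewrite (bigD1 js) //= eqxx big1 ?addr0 => [|j /negbTE ->]; last by rewrite mul0r.
      by rewrite mulrC.
  + have := Hb' (Num.max t0 (beta + 1)).
    have Hm1 : t0 <= Num.max t0 (beta + 1) by rewrite le_max lexx.
    have Hm2 : beta + 1 <= Num.max t0 (beta + 1) by rewrite le_max lexx orbT.
    move=> H; have : Num.max t0 (beta + 1) <= beta; last by lra.
    apply: H => j; have aj : al j <= 0 by rewrite leNgt none.
    have := G0 j; nra.
- move=> HS L0 [t0 [x0 F0]] Hb.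
  have [v0 v0S] : exists v0, v0 \in S by apply/card_gt0P; rewrite HS.
  pose S' := S :\ v0.
  have HS' : #|S'| = n by move: HS; rewrite (cardsD1 v0 S) v0S add1n => [[]].
  pose sg j := L j v0.
  pose c1 (pq : J * J) := if sg pq.1 == 0 then 1 else
     if (0 < sg pq.1) && (sg pq.2 < 0) then - sg pq.2 else 0.
  pose c2 (pq : J * J) := if sg pq.1 == 0 then 0 else
     if (0 < sg pq.1) && (sg pq.2 < 0) then sg pq.1 else 0.
  have c1ge pq : 0 <= c1 pq.
    rewrite /c1; case: eqP => // _; case: andP => // [[_ ?]]; lra.
  have c2ge pq : 0 <= c2 pq.
    rewrite /c2; case: eqP => // _; case: andP => // [[? _]]; lra.
  have ccan pq : c1 pq * sg pq.1 + c2 pq * sg pq.2 = 0.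
    rewrite /c1 /c2; case: eqP => [->|_]; first by rewrite mulr0 mul0r addr0.
    by case: andP => _; [ring | rewrite !mul0r addr0].
  pose comb (f : J -> R) pq := c1 pq * f pq.1 + c2 pq * f pq.2.
  pose L' pq v := comb (fun j => L j v) pq.
  have combsum pq (x : V -> R) :
      \sum_v L' pq v * x v = comb (fun j => \sum_v L j v * x v) pq.
    rewrite /L' /comb mulr_sumr mulr_sumr -big_split /=.
    by apply: eq_bigr => v _; ring.
  have [lam' [lpos lL lal lb]] : exists lam' : J * J -> R, [/\ forall j, 0 <= lam' j,
     forall v, \sum_j lam' j * L' j v = 0,
     \sum_j lam' j * comb al j = 1 & \sum_j lam' j * comb b j <= beta].
    apply: (IH S' _ (comb al) (comb b) L' beta HS').
    + move=> pq v; rewrite in_setD1 negb_and negbK => /orP [/eqP -> | vS].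
        exact: ccan.
      by rewrite /L' /comb !L0 // !mulr0 addr0.
    + exists t0, x0 => pq; rewrite combsum /comb.
      have := F0 pq.1; have := F0 pq.2; have := c1ge pq; have := c2ge pq.
      nra.
    + move=> t x Fx.
      pose x0' v := if v == v0 then 0 else x v.
      pose e j := b j - al j * t - \sum_v L j v * x0' v.
      have upd j s : \sum_v L j v * (if v == v0 then s else x v) =
                     \sum_v L j v * x0' v + sg j * s.
        rewrite (bigD1 v0) //= [in RHS](bigD1 v0) //= /x0' !eqxx mulr0 add0r addrC.
        congr (_ + _); apply: eq_bigr => v /negbTE -> //.
      have Hfm pq : 0 <= c1 pq * e pq.1 + c2 pq * e pq.2.
        have := Fx pq.
        have -> : \sum_v L' pq v * x v = \sum_v L' pq v * x0' v.
          apply: eq_bigr => v _; rewrite /x0'; case: eqP => [->|//].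
          by rewrite [L' _ _]ccan !mul0r.
        rewrite combsum /comb /e; nra.
      have [s Hs] : exists s, forall j, sg j * s <= e j.
        case: (pickP (fun j => sg j < 0)) => [q0 Hq0 | noneg].
        * have [qs Pqs Hmax] := @exists_max R J (fun j => sg j < 0) (fun j => e j / sg j) q0 Hq0.
          exists (e qs / sg qs) => j.
          have eqs : e qs / sg qs * sg qs = e qs by rewrite divfK // lt_eqF.
          have [sj|sj|sj] := ltrgtP 0 (sg j).
          - have := Hfm (j, qs); rewrite /c1 /c2 /= gt_eqF // sj Pqs /=.
            move: (e qs / sg qs) eqs => s' eqs; nra.
          - have := Hmax j sj.
            have eqj : e j / sg j * sg j = e j by rewrite divfK // lt_eqF.
            move: (e qs / sg qs) (e j / sg j) eqj => s' s'' eqj; nra.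
          - have := Hfm (j, j); rewrite /c1 /c2 /= -sj eqxx mul0r addr0 mul1r.
            by rewrite mul0r.
        * exists (- \sum_j `|e j / sg j|) => j.
          have sj : 0 <= sg j by rewrite leNgt noneg.
          have h1 : `|e j / sg j| <= \sum_j `|e j / sg j|.
            by rewrite (bigD1 j) //= lerDl sumr_ge0.
          have h2 := ler_norm (- (e j / sg j)); rewrite normrN in h2.
          move: sj; rewrite le_eqVlt => /orP [/eqP sj | sj].
          - have := Hfm (j, j); rewrite /c1 /c2 /= -sj eqxx mul0r addr0 mul1r.
            by rewrite mul0r.
          - have eqj : e j / sg j * sg j = e j by rewrite divfK // gt_eqF.
            move: (e j / sg j) (\sum_j0 `|e j0 / sg j0|) eqj h1 h2 => a c eqj h1 h2.
            nra.
      apply: (Hb t (fun v => if v == v0 then s else x v)) => j.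
      rewrite upd; have := Hs j; rewrite /e; lra.
  pose lam j := \sum_q lam' (j, q) * c1 (j, q) + \sum_p lam' (p, j) * c2 (p, j).
  have key (f : J -> R) : \sum_j lam j * f j = \sum_pq lam' pq * comb f pq.
    rewrite [RHS](eq_bigr (fun pq => lam' (pq.1, pq.2) * comb f (pq.1, pq.2))); last by case.
    rewrite -(pair_bigA _ (fun p q => lam' (p, q) * comb f (p, q))) /=.
    under [RHS]eq_bigr do under eq_bigr do rewrite /comb /= mulrDr.
    under [RHS]eq_bigr do rewrite big_split /=.
    rewrite big_split /= [X in _ = _ + X]exchange_big /= -big_split /=.
    apply: eq_bigr => j _; rewrite /lam mulrDl !mulr_suml.
    by congr (_ + _); apply: eq_bigr => i _; ring.
  exists lam; split.
  + move=> j; apply: addr_ge0; apply: sumr_ge0 => i _; exact: mulr_ge0.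
  + move=> v; rewrite (key (fun j => L j v)); exact: lL.
  + rewrite key; exact: lal.
  + rewrite key; exact: lb.
Qed.


Lemma weak (R : realFieldType) (V J : finType) (al b : J -> R) (L : J -> V -> R) (beta : R)
  (lam : J -> R) t x :
  (forall j, 0 <= lam j) -> (forall v, \sum_j lam j * L j v = 0) ->
  \sum_j lam j * al j = 1 -> \sum_j lam j * b j <= beta -> feas al b L t x -> t <= beta.
Proof.
move=> lpos lL lal lb F; apply: le_trans lb.
have -> : t = \sum_j lam j * (al j * t + \sum_v L j v * x v).
  under eq_bigr do rewrite mulrDr mulr_sumr.
  rewrite big_split /= exchange_big /=.
  rewrite (eq_bigr (fun v => (\sum_j lam j * L j v) * x v)); last first.
    by move=> v _; rewrite mulr_suml; apply: eq_bigr => j _; rewrite mulrA.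
  rewrite [X in _ + X]big1 ?addr0; last by move=> v _; rewrite lL mul0r.
  under eq_bigr do rewrite mulrA.
  by rewrite -mulr_suml lal mul1r.
by apply: ler_sum => j _; apply: ler_wpM2l.
Qed.

Definition alE (R : realFieldType) (N D : nat) (j : ('I_N * 'I_D * bool) + bool) : R :=
  match j with inr true => 1 | _ => 0 end.

Definition bE (R : realFieldType) (N D : nat) (alpha : 'I_N -> R) (W : 'M[R]_D)
  (xi : 'I_N -> 'cV[R]_D) (gamma : R) (j : ('I_N * 'I_D * bool) + bool) : R :=
  match j with
  | inr true => 0
  | inr false => gamma
  | inl (n, i, s) => if inSV alpha n then (if s then (W *m xi n) i 0 else - (W *m xi n) i 0) else 0
  end.

Definition LE (R : realFieldType) (N D : nat) (alpha : 'I_N -> R) (W : 'M[R]_D)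
  (c : 'cV[R]_D) (j : ('I_N * 'I_D * bool) + bool) (v : ('I_N * 'I_D) + 'I_D) : R :=
  match j, v with
  | inr true, inr k => - c k 0
  | inr false, inl (n, _) => if inSV alpha n then alpha n else 0
  | inl (n, i, s), inr k => if inSV alpha n then (if s then W i k else - W i k) else 0
  | inl (n, i, s), inl (m, i') => if inSV alpha n && (m == n) && (i' == i) then -1 else 0
  | _, _ => 0
  end.

Lemma sumV (R : realFieldType) (N D : nat) (F : ('I_N * 'I_D) + 'I_D -> R) :
  \sum_v F v = \sum_n \sum_i F (inl (n, i)) + \sum_k F (inr k).
Proof. by rewrite big_sumType /= pair_bigA; congr (_ + _); apply: eq_bigr => -[]. Qed.

Lemma sumJ (R : realFieldType) (N D : nat) (F : ('I_N * 'I_D * bool) + bool -> R) :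
  \sum_j F j = \sum_n \sum_i (F (inl (n, i, true)) + F (inl (n, i, false)))
     + (F (inr true) + F (inr false)).
Proof.
rewrite big_sumType /= big_bool; congr (_ + _).
symmetry.
transitivity (\sum_n \sum_i \sum_s F (inl (n, i, s))).
  by apply: eq_bigr => n _; apply: eq_bigr => i _; rewrite big_bool.
by rewrite pair_bigA /= pair_bigA /=; apply: eq_bigr => -[[n i] s].
Qed.


Lemma rowA (R : realFieldType) (N D : nat) (alpha : 'I_N -> R) (W : 'M[R]_D) (c : 'cV[R]_D)
  (x : ('I_N * 'I_D) + 'I_D -> R) :
  \sum_v LE alpha W c (inr true) v * x v = - \sum_k c k 0 * x (inr k).
Proof.
rewrite sumV big1 ?add0r; last by move=> n _; apply: big1 => i _; rewrite mul0r.
by rewrite -sumrN; apply: eq_bigr => k _; rewrite mulNr.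
Qed.

Lemma rowB (R : realFieldType) (N D : nat) (alpha : 'I_N -> R) (W : 'M[R]_D) (c : 'cV[R]_D)
  (x : ('I_N * 'I_D) + 'I_D -> R) :
  \sum_v LE alpha W c (inr false) v * x v =
  \sum_(n | inSV alpha n) alpha n * \sum_i x (inl (n, i)).
Proof.
rewrite sumV [X in _ + X]big1 ?addr0; last by move=> k _; rewrite mul0r.
rewrite [RHS]big_mkcond; apply: eq_bigr => n _ /=.
case: (inSV alpha n); last by apply: big1 => i _; rewrite mul0r.
by rewrite mulr_sumr.
Qed.

Lemma rowC (R : realFieldType) (N D : nat) (alpha : 'I_N -> R) (W : 'M[R]_D) (c : 'cV[R]_D)
  (x : ('I_N * 'I_D) + 'I_D -> R) n i s :
  \sum_v LE alpha W c (inl (n, i, s)) v * x v =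
  if inSV alpha n then (if s then 1 else -1) * \sum_k W i k * x (inr k) - x (inl (n, i))
  else 0.
Proof.
rewrite sumV /=; case: (boolP (inSV alpha n)) => Hn /=; last first.
  rewrite big1 ?add0r; first by apply: big1 => k _; rewrite mul0r.
  by move=> m _; apply: big1 => i' _; rewrite mul0r.
rewrite (bigD1 n) //= (bigD1 i) //= !eqxx /= big1 ?addr0; last first.
  by move=> i' /negbTE ->; rewrite /= mul0r.
rewrite big1 ?addr0; last first.
  move=> m /negbTE Hm; apply: big1 => i' _; by rewrite Hm /= mul0r.
rewrite addrC mulN1r; congr (_ - _).
case: s; rewrite ?mul1r ?mulN1r; first by apply: eq_bigr.
by rewrite -sumrN; apply: eq_bigr => k _; rewrite mulNr.
Qed.

Lemma dAl (R : realFieldType) (N D : nat) (lam : ('I_N * 'I_D * bool) + bool -> R) :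
  \sum_j lam j * alE R j = lam (inr true).
Proof.
rewrite sumJ /= big1 ?add0r ?mulr0 ?addr0 ?mulr1 //.
by move=> n _; apply: big1 => i _; rewrite !mulr0 addr0.
Qed.

Lemma dB (R : realFieldType) (N D : nat) (alpha : 'I_N -> R) (W : 'M[R]_D)
  (xi : 'I_N -> 'cV[R]_D) (gamma : R) (lam : ('I_N * 'I_D * bool) + bool -> R) :
  \sum_j lam j * bE alpha W xi gamma j = lam (inr false) * gamma +
  \sum_(n | inSV alpha n) \sum_i (lam (inl (n, i, true)) - lam (inl (n, i, false))) * (W *m xi n) i 0.
Proof.
rewrite sumJ /= mulr0 add0r addrC; congr (_ + _).
rewrite [RHS]big_mkcond; apply: eq_bigr => n _ /=.
case: (inSV alpha n); last by apply: big1 => i _; rewrite !mulr0 addr0.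
by apply: eq_bigr => i _; rewrite mulrN mulrBl.
Qed.

Lemma dX (R : realFieldType) (N D : nat) (alpha : 'I_N -> R) (W : 'M[R]_D) (c : 'cV[R]_D)
  (lam : ('I_N * 'I_D * bool) + bool -> R) k :
  \sum_j lam j * LE alpha W c j (inr k) = - (lam (inr true) * c k 0) +
  \sum_(n | inSV alpha n) \sum_i (lam (inl (n, i, true)) - lam (inl (n, i, false))) * W i k.
Proof.
rewrite sumJ /= mulr0 addr0 mulrN addrC; congr (_ + _).
rewrite [RHS]big_mkcond; apply: eq_bigr => n _ /=.
case: (inSV alpha n); last by apply: big1 => i _; rewrite !mulr0 addr0.
by apply: eq_bigr => i _; rewrite mulrN mulrBl.
Qed.

Lemma dU (R : realFieldType) (N D : nat) (alpha : 'I_N -> R) (W : 'M[R]_D) (c : 'cV[R]_D)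
  (lam : ('I_N * 'I_D * bool) + bool -> R) m i' :
  \sum_j lam j * LE alpha W c j (inl (m, i')) =
  if inSV alpha m then lam (inr false) * alpha m - (lam (inl (m, i', true)) + lam (inl (m, i', false)))
  else 0.
Proof.
rewrite sumJ /= mulr0 add0r; case: (boolP (inSV alpha m)) => Hm; last first.
  rewrite mulr0 addr0; apply: big1 => n _; apply: big1 => i _.
  case: (boolP (inSV alpha n)) => Hn /=; last by rewrite !mulr0 addr0.
  case: eqP => [Emn|_]; last by rewrite !mulr0 addr0.
  by move: Hm; rewrite Emn Hn.
rewrite addrC; congr (_ + _).
rewrite (bigD1 m) //= (bigD1 i') //= Hm !eqxx /= big1 ?addr0; last first.
  by move=> i /negbTE; rewrite eq_sym => ->; rewrite !mulr0 addr0.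
rewrite big1 ?addr0; first by rewrite !mulrN1 opprD.
move=> n /negbTE Hn; apply: big1 => i _; by rewrite eq_sym Hn andbF !mulr0 addr0.
Qed.

Unset Implicit Arguments.

Theorem proposition3 (R : realFieldType) (N D p : nat)
  (xi : 'I_N -> 'cV[R]_D) (eps : R) (ximin ximax : 'I_D -> R)
  (W : 'M[R]_D) (alpha : 'I_N -> R) (k : 'I_N)
  (y : 'cV[R]_p) (H : 'M[R]_(p, D)) (beta : R) :
  0 < eps < 1 ->
  posdef (scov xi) ->
  inv_sqrt_of W (scov xi) ->
  svc_kkt eps (fun a b => kern (fun d => ximax d - ximin d) W (xi a) (xi b)) alpha ->
  inBSV eps alpha k ->
  let gamma := gammak alpha W xi k in
  (forall x : 'cV[R]_D, inU alpha W xi gamma x -> ((H *m x)^T *m y) 0 0 <= beta)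
  <->
  (exists (pi : R) (mu rho : 'I_N -> 'cV[R]_D),
     [/\ 0 <= pi,
         forall n, inSV alpha n -> vle 0 (mu n) /\ vle 0 (rho n),
         \sum_(n | inSV alpha n) ((mu n - rho n)^T *m W *m xi n) 0 0 + pi * gamma <= beta,
         \sum_(n | inSV alpha n) (W *m (rho n - mu n)) + H^T *m y = 0 &
         forall n, inSV alpha n -> rho n + mu n = (pi * alpha n) *: (const_mx 1 : 'cV[R]_D)]).
Proof.
move=> _ _ [Wsym _] _ Hk gamma.
have Wij i j : W i j = W j i by rewrite -{1}Wsym mxE.
have kSV : inSV alpha k by move: Hk; rewrite /inBSV => /andP [].
have obj : forall (x : 'cV[R]_D), ((H *m x)^T *m y) 0 0 = \sum_j (H^T *m y) j 0 * x j 0.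
  by move=> x; rewrite trmx_mul -mulmxA mxE; apply: eq_bigr => i _; rewrite mxE mulrC.
have Wx : forall (x : 'cV[R]_D) i, (W *m x) i 0 = \sum_j W i j * x j 0.
  by move=> x i; rewrite mxE.
have WB : forall (x z : 'cV[R]_D) i, (W *m (x - z)) i 0 = (W *m x) i 0 - (W *m z) i 0.
  by move=> x z i; rewrite mulmxBr !mxE.
set c := H^T *m y in obj *.
clearbody c.
pose al := @alE R N D. pose bb := bE alpha W xi gamma. pose LL := LE alpha W c.
split.
- move=> Hrob.
  have Hz : forall j v, v \notin [set: ('I_N * 'I_D) + 'I_D] -> LL j v = 0.
    by move=> j v; rewrite in_setT.
  have Hf : exists t x, feas al bb LL t x.
    exists (\sum_i c i 0 * xi k i 0).
    exists (fun v => match v with inl (n, i) => `|(W *m (xi k - xi n)) i 0| | inr i => xi k i 0 end).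
    case => [[[n i] s] | [|]].
    + rewrite /LL rowC /al /= mul0r add0r /bb /=.
      case: (inSV alpha n) => //; rewrite WB -Wx.
      have h1 := ler_norm ((W *m xi k) i 0 - (W *m xi n) i 0).
      have h2 := ler_norm (- ((W *m xi k) i 0 - (W *m xi n) i 0)); rewrite normrN in h2.
      case: s; lra.
    + rewrite /LL rowA /al /= mul1r /bb /=; lra.
    + rewrite /LL rowB /al /= mul0r add0r /bb /= /gamma /gammak /l1norm.
      by apply: ler_sum => n _.
  have Hbd : forall t x, feas al bb LL t x -> t <= beta.
    move=> t xv F.
    pose x := \col_i xv (inr i). pose ups n := \col_i xv (inl (n, i)).
    have Hu : inU alpha W xi gamma x.
      exists ups; split.
      + apply: le_trans (F (inr false)); rewrite /LL rowB /al /= mul0r add0r.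
        apply: ler_sum => n _; rewrite le_eqVlt; apply/orP; left; apply/eqP.
        by congr (_ * _); rewrite mxE; apply: eq_bigr => i _; rewrite !mxE mulr1.
      + move=> n Hn; split => i.
        * have := F (inl (n, i, false)); rewrite /LL rowC /al /bb /= Hn mul0r add0r.
          rewrite WB (Wx x) !mxE.
          have -> : \sum_j W i j * x j 0 = \sum_j W i j * xv (inr j).
            by apply: eq_bigr => j _; rewrite mxE.
          lra.
        * have := F (inl (n, i, true)); rewrite /LL rowC /al /bb /= Hn mul0r add0r.
          rewrite WB (Wx x) !mxE.
          have -> : \sum_j W i j * x j 0 = \sum_j W i j * xv (inr j).
            by apply: eq_bigr => j _; rewrite mxE.
          lra.
    have := Hrob x Hu; rewrite obj.
    have := F (inr true); rewrite /LL rowA /al /bb /= mul1r.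
    have -> : \sum_j c j 0 * x j 0 = \sum_k c k 0 * xv (inr k).
      by apply: eq_bigr => j _; rewrite mxE.
    lra.
  have [lam [lpos lL lal lb]] := @farkas R _ _ [set: _] _ al bb LL beta erefl Hz Hf Hbd.
  have l1 : lam (inr true) = 1 by rewrite -lal /al dAl.
  exists (lam (inr false)), (fun n => \col_i lam (inl (n, i, true))),
    (fun n => \col_i lam (inl (n, i, false))); split.
  + exact: lpos.
  + by move=> n _; split => i; rewrite !mxE; exact: lpos.
  + move: lb; rewrite /bb dB.
    have -> : \sum_(n | inSV alpha n)
        (((\col_i lam (inl (n, i, true))) - (\col_i lam (inl (n, i, false))))^T *m W *m xi n) 0 0 =
      \sum_(n | inSV alpha n) \sum_i (lam (inl (n, i, true)) - lam (inl (n, i, false))) * (W *m xi n) i 0.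
      apply: eq_bigr => n _; rewrite -mulmxA mxE; apply: eq_bigr => i _.
      by rewrite !mxE.
    lra.
  + apply/matrixP => kk j; rewrite ord1 !mxE summxE.
    have := lL (inr kk); rewrite /LL dX l1 mul1r.
    have -> : \sum_(n | inSV alpha n)
        (W *m ((\col_i lam (inl (n, i, false))) - (\col_i lam (inl (n, i, true))))) kk 0 =
      - \sum_(n | inSV alpha n) \sum_i (lam (inl (n, i, true)) - lam (inl (n, i, false))) * W i kk.
      rewrite -sumrN; apply: eq_bigr => n _; rewrite mxE -sumrN; apply: eq_bigr => i _.
      by rewrite !mxE Wij; ring.
    lra.
  + move=> n Hn; apply/matrixP => i j; rewrite ord1 !mxE.
    have := lL (inl (n, i)); rewrite /LL dU Hn; lra.
- move=> [pi [mu [rho [pi0 Hmr Hb Hst Hup]]]] x [ups [Hsum Hv]].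
  pose lam (j : ('I_N * 'I_D * bool) + bool) : R := match j with
    | inr true => 1 | inr false => pi
    | inl (n, i, s) => if inSV alpha n then (if s then mu n i 0 else rho n i 0) else 0 end.
  pose xv (v : ('I_N * 'I_D) + 'I_D) : R := match v with
    | inl (n, i) => ups n i 0 | inr kk => x kk 0 end.
  rewrite obj; apply: (@weak R _ _ al bb LL beta lam _ xv).
  + case => [[[n i] s]|[|]] //=; case: ifP => // Hn; have [h1 h2] := Hmr n Hn.
    case: s; [have := h1 i | have := h2 i]; by rewrite mxE.
  + case => [[m i']|kk].
    * rewrite /LL dU /=; case: ifP => // Hm; rewrite Hm.
      have := congr1 (fun M : 'cV[R]_D => M i' 0) (Hup m Hm); rewrite !mxE /=; lra.
    * rewrite /LL dX /= mul1r.
      have := congr1 (fun M : 'cV[R]_D => M kk 0) Hst; rewrite !mxE summxE.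
      have -> : \sum_(n | inSV alpha n) (W *m (rho n - mu n)) kk 0 =
        - \sum_(n | inSV alpha n) \sum_i (lam (inl (n, i, true)) - lam (inl (n, i, false))) * W i kk.
        rewrite -sumrN; apply: eq_bigr => n Hn; rewrite mxE -sumrN; apply: eq_bigr => i _.
        by rewrite !mxE /= Hn Wij; ring.
      lra.
  + by rewrite /al dAl.
  + rewrite /bb dB /=.
    have <- : \sum_(n | inSV alpha n) ((mu n - rho n)^T *m W *m xi n) 0 0 =
      \sum_(n | inSV alpha n) \sum_i (lam (inl (n, i, true)) - lam (inl (n, i, false))) * (W *m xi n) i 0.
      apply: eq_bigr => n Hn; rewrite -mulmxA mxE; apply: eq_bigr => i _.
      by rewrite !mxE /= Hn.
    lra.
  + case => [[[n i] s] | [|]].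
    * rewrite /LL rowC /al /bb /= mul0r add0r.
      case: ifP => // Hn; have [h1 h2] := Hv n Hn.
      have := h1 i; have := h2 i; rewrite WB Wx !mxE.
      have -> : \sum_j W i j * xv (inr j) = \sum_j W i j * x j 0 by [].
      case: s; lra.
    * rewrite /LL rowA /al /bb /= mul1r; lra.
    * rewrite /LL rowB /al /bb /= mul0r add0r; apply: le_trans Hsum.
      apply: ler_sum => n _; rewrite le_eqVlt; apply/orP; left; apply/eqP.
      by congr (_ * _); rewrite mxE; apply: eq_bigr => i _; rewrite !mxE mulr1.
Qed.
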